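(* The map sending a ranked $X$-tree $(\mathcal{N},r)$ to the set $\{\mathcal{P}(\mathcal{S}_i(\mathcal{N})) : 0\le i\le\sigma(r)\}$ induces a bijection between isomorphism classes of ranked $X$-trees and subsets of $\mathfrak{B}(X)$ that contain the partition $\{X\}$ and whose elements are pairwise comparable with respect to $\sqsubseteq$ (i.e. chains of the poset $(\mathfrak{B}(X),\sqsubseteq)$ containing $\{X\}$).
   Context: Let $X$ be a finite non-empty set. A rooted DAG $N=(V,A)$ is a finite directed acyclic graph with a vertex $\rho$ of indegree $0$ (the root) from which every vertex is reachable by a directed path. Leaf: outdegree $0$; tree vertex: indegree $\le1$; reticulation vertex: indegree $\ge2$; if $(u,v)\in A$ then $u$ is a parent of $v$. A reticulation cycle consists of two distinct directed paths with the same start and end vertex and no other common vertices. A rooted $X$-cactus $\mathcal{N}=(N,\varphi)$ is a rooted DAG with a map $\varphi:X\to V$ such that every vertex has indegree at most $2$, no two distinct reticulation cycles share an arc, and $\varphi(X)$ contains all leaves and all tree vertices of outdegree $1$. A rooted $X$-tree is a rooted $X$-cactus without reticulation vertices. A time-stamp function is $t:V\to\mathbb{R}_{\ge0}$ with $t(v)=0$ for $v\in\varphi(X)$, $t(u)>t(v)$ for arcs $(u,v)$ with $v$ not a reticulation vertex, and $t(v)=t(p_1)=t(p_2)$ for each reticulation vertex $v$ with parents $p_1,p_2$. Its size is $\sigma(t)=|t(V)|-1$. A ranking is a time-stamp function $r$ with $r(V)=\{0,\dots,\sigma(r)\}$; a ranked $X$-tree is a rooted $X$-tree with a ranking. Two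 ranked $X$-trees $((V',A'),\varphi'),r')$ and $((V'',A''),\varphi''),r'')$ are isomorphic if there is a digraph isomorphism $f:V'\to V''$ with $f(\varphi'(x))=\varphi''(x)$ for all $x\in X$ and $r'(v)=r''(f(v))$ for all $v\in V'$. A vertex $u$ is a descendant of $v$ if some directed path from the root to $u$ contains $v$; it is a strict descendant if every directed path from the root to $u$ contains $v$, and a non-strict descendant otherwise. $S(u)=\{x\in X:\varphi(x)$ is a strict descendant of $u\}$, $H(u)=\{x\in X:\varphi(x)$ is a non-strict descendant of $u\}$. For a ranked $(\mathcal{N},r)$ and $0\le i\le\sigma(r)$ let $V_i$ be the set of vertices $u$ with $r(u)\le i$ and $r(p)>i$ for all parents $p$ of $u$, and $\mathcal{S}_i(\mathcal{N})=\{(S(u),H(u)):u\in V_i\}\cup\{(H(u),\emptyset):u\in V_i,\ H(u)\neq\emptyset\}$. For a collection $\mathcal{S}$ of pairs $(S,H)$, $\mathcal{P}(\mathcal{S})=\{S:(S,H)\in\mathcal{S}\}$. $\mathfrak{B}(X)$ is the set of partitions of $X$ (sets of non-empty pairwise disjoint subsets with union $X$), and $\mathcal{P}_1\sqsubseteq\mathcal{P}_2$ means every block of $\mathcal{P}_1$ is contained in some block of $\mathcal{P}_2$. *)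

(* Defs.v *)
From HB Require Import structures.
From mathcomp Require Import all_boot.
From mathcomp Require Import boolp.

Set Implicit Arguments.
Unset Strict Implicit.
Unset Printing Implicit Defensive.

Section Digraph.
Variable V : finType.
Variable arc : rel V.

Definition indeg (v : V) : nat := #|[set p | arc p v]|.
Definition outdeg (v : V) : nat := #|[set w | arc v w]|.
Definition leafv (v : V) : bool := outdeg v == 0.
Definition tree_vertex (v : V) : bool := indeg v <= 1.
Definition reticulation (v : V) : bool := 2 <= indeg v.

Definition dpath (q : seq V) : bool :=
  if q is a :: q' then path arc a q' else false.

Definition path_arcs (q : seq V) : seq (V * V) := zip q (behead q).

Definition acyclic : Prop :=
  forall (v : V) (p : seq V), path arc v p -> last v p = v -> p = [::].

Definition rooted_DAG (rho : V) : Prop :=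
  [/\ acyclic, indeg rho = 0 & forall v, connect arc rho v].

Definition reticulation_cycle (q1 q2 : seq V) : Prop :=
  [/\ dpath q1, dpath q2, q1 <> q2 &
      exists s t, [/\ head s q1 = s, head s q2 = s, last s q1 = t, last s q2 = t &
        forall w, w \in q1 -> w \in q2 -> w = s \/ w = t]].

(* no two distinct reticulation cycles share an arc; a cycle is the unordered
   pair of its two paths *)
Definition no_shared_arc : Prop :=
  forall q1 q2 q1' q2', reticulation_cycle q1 q2 -> reticulation_cycle q1' q2' ->
    (exists e, e \in path_arcs q1 ++ path_arcs q2 /\ e \in path_arcs q1' ++ path_arcs q2') ->
    (q1' = q1 /\ q2' = q2) \/ (q1' = q2 /\ q2' = q1).

End Digraph.

Definition rooted_X_cactus (X V : finType) (arc : rel V) (rho : V) (phi : X -> V) : Prop :=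
  [/\ rooted_DAG arc rho,
      forall v, indeg arc v <= 2,
      no_shared_arc arc &
      forall v, (leafv arc v || (tree_vertex arc v && (outdeg arc v == 1))) ->
                exists x, phi x = v].

Definition rooted_X_tree (X V : finType) (arc : rel V) (rho : V) (phi : X -> V) : Prop :=
  rooted_X_cactus arc rho phi /\ forall v, ~~ reticulation arc v.

Definition tsize (V : finType) (t : V -> nat) : nat :=
  (size (undup [seq t v | v <- enum V])).-1.

Definition time_stamp (X V : finType) (arc : rel V) (phi : X -> V) (t : V -> nat) : Prop :=
  [/\ forall x, t (phi x) = 0,
      forall u v, arc u v -> ~~ reticulation arc v -> t v < t u &
      forall u v, arc u v -> reticulation arc v -> t u = t v].

Definition ranking (X V : finType) (arc : rel V) (phi : X -> V) (r : V -> nat) : Prop :=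
  time_stamp arc phi r /\
  forall k, (k \in [seq r v | v <- enum V]) = (k <= tsize r).

Record rankedXTree (X : finType) := RankedXTree {
  rt_V : finType;
  rt_arc : rel rt_V;
  rt_root : rt_V;
  rt_phi : X -> rt_V;
  rt_rank : rt_V -> nat;
  rt_is_tree : rooted_X_tree rt_arc rt_root rt_phi;
  rt_is_ranking : ranking rt_arc rt_phi rt_rank }.

Definition rt_iso (X : finType) (T1 T2 : rankedXTree X) : Prop :=
  exists f : rt_V T1 -> rt_V T2,
    [/\ bijective f,
        forall u v, @rt_arc X T2 (f u) (f v) = @rt_arc X T1 u v,
        forall x, f (@rt_phi X T1 x) = @rt_phi X T2 x &
        forall v, @rt_rank X T1 v = @rt_rank X T2 (f v)].

Section Clusters.
Variables (X V : finType) (arc : rel V) (rho : V) (phi : X -> V).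

Definition root_path (u : V) (p : seq V) : Prop := path arc rho p /\ last rho p = u.

Definition descendant (u v : V) : Prop :=
  exists p, root_path u p /\ v \in rho :: p.
Definition strict_descendant (u v : V) : Prop :=
  forall p, root_path u p -> v \in rho :: p.
Definition nonstrict_descendant (u v : V) : Prop :=
  descendant u v /\ ~ strict_descendant u v.

Definition Sset (u : V) : {set X} := [set x | `[< strict_descendant (phi x) u >]].
Definition Hset (u : V) : {set X} := [set x | `[< nonstrict_descendant (phi x) u >]].

Variable r : V -> nat.

Definition Vi (i : nat) : {set V} :=
  [set u | (r u <= i) && [forall p, arc p u ==> (i < r p)]].

Definition Si (i : nat) : {set {set X} * {set X}} :=
  [set (Sset u, Hset u) | u in Vi i] :|:
  [set (Hset u, set0) | u in [set u in Vi i | Hset u != set0]].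

End Clusters.

Definition Pof (X : finType) (S : {set {set X} * {set X}}) : {set {set X}} :=
  [set s.1 | s in S].

Definition partition_chain (X : finType) (T : rankedXTree X) : {set {set {set X}}} :=
  [set Pof (Si (@rt_arc X T) (@rt_root X T) (@rt_phi X T) (@rt_rank X T) i)
     | i : 'I_(tsize (@rt_rank X T)).+1].

Definition refines (X : finType) (P1 P2 : {set {set X}}) : Prop :=
  forall B, B \in P1 -> exists2 B', B' \in P2 & B \subset B'.

Definition chain_with_top (X : finType) (C : {set {set {set X}}}) : Prop :=
  [/\ forall P, P \in C -> partition P [set: X],
      [set [set: X]] \in C &
      forall P Q, P \in C -> Q \in C -> refines P Q \/ refines Q P].

(* Main.v *)
Require Import Defs.
From HB Require Import structures.
From mathcomp Require Import all_boot.
From mathcomp Require Import boolp.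
From mathcomp Require Import zify.
Set Implicit Arguments.
Unset Strict Implicit.
Unset Printing Implicit Defensive.
Local Notation tsz := Defs.tsize.


Section Tree.
Variable X : finType.
Variable T : rankedXTree X.
Local Notation V := (rt_V T).
Local Notation arc := (@rt_arc X T).
Local Notation rho := (rt_root T).
Local Notation phi := (rt_phi T).
Local Notation r := (@rt_rank X T).

Lemma t_indeg v : indeg arc v <= 1.
Proof.
have [_ H] := rt_is_tree T; by move: (H v); rewrite /reticulation -ltnNge ltnS.
Qed.

Lemma t_upar p q v : arc p v -> arc q v -> p = q.
Proof.
move=> hp hq; have /card_le1_eqP H := t_indeg v.
by have := H p q; rewrite !inE => /(_ hp hq).
Qed.

Lemma t_rootnp p : ~~ arc p rho.
Proof.
have [[[_ H _] _ _ _] _] := rt_is_tree T.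
apply/negP=> hp; move: H; rewrite /indeg => /eqP; rewrite cards_eq0 => /eqP H.
by have := in_set0 p; rewrite -H inE hp.
Qed.

Lemma t_reach v : connect arc rho v.
Proof. by have [[[_ _ H] _ _ _] _] := rt_is_tree T. Qed.

Lemma t_rank_arc u v : arc u v -> r v < r u.
Proof.
have [[_ H _] _] := rt_is_ranking T; have [_ R] := rt_is_tree T.
by move=> h; apply: H.
Qed.

Lemma t_rank_path u p : path arc u p -> r (last u p) <= r u /\ (p != [::] -> r (last u p) < r u).
Proof.
elim: p u => [|y p IH] u //=; move=> /andP[a hp]; have [h1 h2] := IH _ hp.
have := t_rank_arc a; split; first by apply: leq_trans h1 (ltnW _).
by move=> _; apply: leq_ltn_trans h1 _.
Qed.

Lemma t_rank_conn u v : connect arc u v -> r v <= r u /\ (u != v -> r v < r u).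
Proof.
move=> /connectP[p hp ->]; have [h1 h2] := t_rank_path hp; split=> //.
by case: p hp h1 h2 => [|y p] //=; [rewrite eqxx | move=> _ _ ->].
Qed.

Lemma t_antisym u v : connect arc u v -> connect arc v u -> u = v.
Proof.
move=> h1 h2; case: (eqVneq u v) => // ne.
have [_ /(_ ne) a] := t_rank_conn h1; have [b _] := t_rank_conn h2.
by move: (leq_trans a b); rewrite ltnn.
Qed.

Lemma t_conn_last u v : connect arc u v -> u != v -> exists2 p, arc p v & connect arc u p.
Proof.
move=> /connectP[p hp ->]; elim/last_ind: p hp => [|p y _] /=; first by rewrite eqxx.
rewrite rcons_path last_rcons => /andP[hp a] _; exists (last u p) => //.
by apply/connectP; exists p.
Qed.

Lemma t_conn_first u v : connect arc u v -> u != v -> exists2 c, arc u c & connect arc c v.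
Proof.
move=> /connectP[[|y p] /= hp ->]; first by rewrite eqxx.
move: hp => /andP[a hp] _; exists y => //; by apply/connectP; exists p.
Qed.

Lemma t_par v : v != rho -> exists2 p, arc p v & connect arc rho p.
Proof. by move=> ne; apply: t_conn_last (t_reach v) _; rewrite eq_sym. Qed.

Lemma t_anc_in_path p a : path arc rho p -> connect arc a (last rho p) -> a \in rho :: p.
Proof.
elim/last_ind: p a => [|p y IH] a /=.
  move=> _ c; case: (eqVneq a rho) => [->|ne]; first by rewrite inE eqxx.
  by have [q qr _] := t_conn_last c ne; have := t_rootnp q; rewrite qr.
rewrite rcons_path last_rcons => /andP[hp ay] c.
case: (eqVneq a y) => [->|ne]; first by rewrite -cats1 -cat_cons mem_cat mem_seq1 eqxx orbT.
have [q qy aq] := t_conn_last c ne; rewrite (t_upar qy ay) in aq.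
by rewrite -cats1 -cat_cons mem_cat IH.
Qed.

Lemma t_path_cmp x p a b : path arc x p -> a \in x :: p -> b \in x :: p ->
  connect arc a b || connect arc b a.
Proof.
elim: p x => [|y p IH] x /=.
  by move=> _; rewrite !inE => /eqP-> /eqP->; rewrite connect0.
move=> /andP[xy hp] ha hb.
have hxp : path arc x (y :: p) by rewrite /= xy.
move: ha; rewrite in_cons => /predU1P[->|ha]; move: hb; rewrite in_cons => /predU1P[->|hb].
- by rewrite connect0.
- by apply/orP; left; apply: (path_connect hxp); rewrite in_cons hb orbT.
- suff -> : connect arc x a by rewrite orbT.
  by apply: (path_connect hxp); rewrite in_cons ha orbT.
- exact: (IH y hp ha hb).
Qed.

Lemma t_in_path_conn x p a : path arc x p -> a \in x :: p -> connect arc a (last x p).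
Proof.
elim: p x => [|y p IH] x /=; first by move=> _; rewrite inE => /eqP->.
move=> /andP[xy hp]; rewrite inE => /predU1P[->|ha].
  by apply: (path_connect (x:=x) (p:=y::p)); rewrite /= ?xy ?hp // (mem_last x (y :: p)).
exact: IH.
Qed.

Lemma t_cmp a b z : connect arc a z -> connect arc b z -> connect arc a b || connect arc b a.
Proof.
have /connectP[p hp ez] := t_reach z; rewrite ez => ha hb.
exact: (t_path_cmp hp (t_anc_in_path hp ha) (t_anc_in_path hp hb)).
Qed.

Lemma t_phi_rank x : r (phi x) = 0.
Proof. by have [[H _ _] _] := rt_is_ranking T. Qed.

Lemma t_phi_leaf x w : ~~ arc (phi x) w.
Proof. by apply/negP=> a; have := t_rank_arc a; rewrite t_phi_rank. Qed.

Lemma t_leaf_lab v : (forall w, ~~ arc v w) -> exists x, phi x = v.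
Proof.
move=> H; have [[_ _ _ L] _] := rt_is_tree T; apply: L; apply/orP; left.
rewrite /leafv /outdeg cards_eq0; apply/eqP/setP=> w; rewrite inE in_set0.
exact/negbTE.
Qed.

Lemma t_has_leaf u : exists x, connect arc u (phi x).
Proof.
have H : forall n u, r u <= n -> exists x, connect arc u (phi x).
  elim=> [|n IH] u0 hu; case: (boolP [exists w, arc u0 w]) => [/existsP[w a]|ne].
  - by have := t_rank_arc a; rewrite ltnNge (leq_trans hu).
  - have [x <-] : exists x, phi x = u0.
      by apply: t_leaf_lab => w; apply/negP=> a; case/negP: ne; apply/existsP; exists w.
    by exists x; rewrite connect0.
  - have [x hx] := IH w (leq_trans (t_rank_arc a) hu); exists x.
    exact: connect_trans (connect1 a) hx.
  - have [x <-] : exists x, phi x = u0.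
      by apply: t_leaf_lab => w; apply/negP=> a; case/negP: ne; apply/existsP; exists w.
    by exists x; rewrite connect0.
exact: (H _ u (leqnn _)).
Qed.

Lemma t_two u c : arc u c -> exists2 c', arc u c' & c' != c.
Proof.
move=> uc; case: (boolP [exists c', arc u c' && (c' != c)]) => [/existsP[c' /andP[a b]]|ne].
  by exists c'.
exfalso; have E : [set w | arc u w] = [set c].
  apply/setP=> w; rewrite !inE; apply/idP/eqP => [a|->//].
  case: (eqVneq w c) => // ne'; case/negP: ne; apply/existsP; exists w; by rewrite a ne'.
have [[_ _ _ L] _] := rt_is_tree T.
have [x hx] : exists x, phi x = u.
  apply: L; apply/orP; right; rewrite /tree_vertex t_indeg /outdeg E cards1 //.
by have := t_phi_leaf x c; rewrite hx uc.
Qed.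

Lemma t_no_back u c : arc u c -> connect arc c u -> False.
Proof.
move=> a h; have [h1 _] := t_rank_conn h; have := t_rank_arc a.
by rewrite ltnNge h1.
Qed.

Lemma t_child_disj u c c' z : arc u c -> arc u c' -> c != c' ->
  connect arc c z -> connect arc c' z -> False.
Proof.
move=> uc uc' ne hc hc'; case/orP: (t_cmp hc hc') => h.
  have [q qc' cq] := t_conn_last h ne; rewrite (t_upar qc' uc') in cq.
  exact: t_no_back uc cq.
have ne2 : c' != c by rewrite eq_sym.
have [q qc cq] := t_conn_last h ne2.
rewrite (t_upar qc uc) in cq; exact: t_no_back uc' cq.
Qed.

Definition clus u := [set x | connect arc u (phi x)].

Lemma t_clus_sub u v : (clus u \subset clus v) = connect arc v u.
Proof.
apply/idP/idP; last first.
  by move=> h; apply/subsetP=> x; rewrite !inE; exact: connect_trans h.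
move=> s; have [x hx] := t_has_leaf u.
have xv : connect arc v (phi x) by have := subsetP s x; rewrite !inE; apply.
case/orP: (t_cmp xv hx) => // h.
case: (eqVneq u v) => [->|ne]; first by rewrite connect0.
have [c uc cv] := t_conn_first h ne; have [c' uc' ne'] := t_two uc.
have [y hy] := t_has_leaf c'.
have yu : y \in clus u by rewrite inE; exact: connect_trans (connect1 uc') hy.
have yv := subsetP s y yu; rewrite inE in yv.
have ne2 : c != c' by rewrite eq_sym.
exfalso; exact: (t_child_disj uc uc' ne2 (connect_trans cv yv) hy).
Qed.

Lemma t_clus_inj : injective clus.
Proof.
move=> u v e; apply: t_antisym; rewrite -t_clus_sub e subxx //.
Qed.

Lemma t_clus_proper u v : (clus v \proper clus u) = connect arc u v && (u != v).
Proof.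
rewrite properE !t_clus_sub; case h: (connect arc u v) => //=.
case: (eqVneq u v) => [->|ne]; first by rewrite connect0.
apply/negP=> h'; by rewrite (t_antisym h h') eqxx in ne.
Qed.

Lemma t_strict w u : strict_descendant arc rho w u <-> connect arc u w.
Proof.
split.
  move=> H; have /connectP[p hp e] := t_reach w.
  have := H p (conj hp (esym e)) => hu; rewrite e; exact: t_in_path_conn hp hu.
move=> c p [hp e]; apply: t_anc_in_path hp _; by rewrite e.
Qed.

Lemma t_desc w u : descendant arc rho w u -> connect arc u w.
Proof. by move=> [p [[hp e] hu]]; rewrite -e; exact: t_in_path_conn hp hu. Qed.

Lemma t_Sset u : Sset arc rho phi u = clus u.
Proof.
apply/setP=> x; rewrite !inE; apply/idP/idP => [/asboolP/t_strict //|H].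
by apply/asboolP/t_strict.
Qed.

Lemma t_Hset u : Hset arc rho phi u = set0.
Proof.
apply/setP => x; rewrite inE in_set0; apply/asboolP => -[d nd]; apply: nd.
by apply/t_strict; exact: t_desc d.
Qed.

Lemma t_Pi i : Pof (Si arc rho phi r i) = [set clus u | u in Vi arc r i].
Proof.
rewrite /Pof /Si; apply/setP => B; apply/imsetP/imsetP.
  move=> [s hs ->]; rewrite in_setU in hs; case/orP: hs => /imsetP[u hu ->] /=.
    by exists u => //; rewrite t_Sset.
  by rewrite inE t_Hset eqxx andbF in hu.
move=> [u hu ->]; exists (Sset arc rho phi u, Hset arc rho phi u); last by rewrite /= t_Sset.
by rewrite in_setU; apply/orP; left; apply/imsetP; exists u.
Qed.

Lemma t_rank_le v : r v <= tsz r.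
Proof. by have [_ H] := rt_is_ranking T; rewrite -H; apply: map_f; rewrite mem_enum. Qed.

Lemma t_rank_ex k : k <= tsz r -> exists v, r v = k.
Proof. by have [_ H] := rt_is_ranking T; rewrite -H => /mapP[v _ ->]; exists v. Qed.

Lemma t_root_rank : r rho = tsz r.
Proof.
apply/eqP; rewrite eqn_leq t_rank_le /=.
have [v hv] := t_rank_ex (leqnn (tsz r)); rewrite -hv.
by have [] := t_rank_conn (t_reach v).
Qed.

Lemma t_Vi_anc i j u w z : u \in Vi arc r i -> w \in Vi arc r j -> i <= j ->
  connect arc u z -> connect arc w z -> connect arc w u.
Proof.
rewrite !inE => /andP[ru _] /andP[rw /forallP pw] ij hu hw.
case/orP: (t_cmp hw hu) => // h; case: (eqVneq u w) => [->|ne]; first exact: connect0.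
have [p pw' up] := t_conn_last h ne; have := implyP (pw p) pw'.
have [h1 _] := t_rank_conn up; move=> jp; exfalso.
have : r p <= j by apply: leq_trans h1 (leq_trans ru ij).
by rewrite leqNgt jp.
Qed.

Lemma t_Vi_ex i z : r z <= i -> exists2 u, u \in Vi arc r i & connect arc u z.
Proof.
have H : forall n z, i - r z < n -> r z <= i -> exists2 u, u \in Vi arc r i & connect arc u z.
  elim=> [|n IH] z0 // hn hz.
  case: (boolP [forall p, arc p z0 ==> (i < r p)]) => [hf|].
    by exists z0; rewrite ?inE ?hz ?hf ?connect0.
  rewrite negb_forall => /existsP[p]; rewrite negb_imply -leqNgt => /andP[a hp].
  have := t_rank_arc a => lt.
  have [u hu c] := IH p ltac:(lia) hp; exists u => //.
  exact: connect_trans c (connect1 a).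
by apply: (H (i - r z).+1).
Qed.

Lemma t_clus_n0 u : clus u != set0.
Proof.
have [x hx] := t_has_leaf u; apply/eqP=> e; by have := in_set0 x; rewrite -e inE hx.
Qed.

Definition tP i := [set clus u | u in Vi arc r i].

Lemma t_P_part i : partition (tP i) [set: X].
Proof.
apply/and3P; split.
- apply/eqP/setP => x; rewrite inE; apply/bigcupP.
  have [u hu c] := t_Vi_ex (i:=i) (z:=phi x) ltac:(by rewrite t_phi_rank).
  by exists (clus u); [apply/imsetP; exists u | rewrite inE].
- apply/trivIsetP => A B /imsetP[u hu ->] /imsetP[w hw ->] ne.
  rewrite -setI_eq0; apply/eqP/setP => x; rewrite !inE; apply/negP => /andP[h1 h2].
  have a := t_Vi_anc hu hw (leqnn i) h1 h2; have b := t_Vi_anc hw hu (leqnn i) h2 h1.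
  by rewrite (t_antisym a b) eqxx in ne.
- apply/imsetP => -[u _ e]; have := t_clus_n0 u; by rewrite -e eqxx.
Qed.

Lemma t_P_ref i j : i <= j -> refines (tP i) (tP j).
Proof.
move=> ij B /imsetP[u hu ->]; have [x hx] := t_has_leaf u.
have [w hw cw] := t_Vi_ex (i:=j) (z:=phi x) ltac:(by rewrite t_phi_rank).
exists (clus w); first by apply/imsetP; exists w.
rewrite t_clus_sub; exact: t_Vi_anc hu hw ij hx cw.
Qed.

Lemma t_P_top : tP (tsz r) = [set [set: X]].
Proof.
have cr : clus rho = [set: X] by apply/setP=> x; rewrite !inE t_reach.
apply/setP=> B; rewrite inE; apply/imsetP/eqP => [[u hu ->]|->].
  case: (eqVneq u rho) => [->//|ne]; have [p pu _] := t_par ne.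
  move: hu; rewrite inE => /andP[_ /forallP/(_ p)/implyP/(_ pu)].
  by rewrite ltnNge t_rank_le.
exists rho => //; rewrite inE t_root_rank leqnn /=; apply/forallP=> p.
by rewrite (negbTE (t_rootnp p)).
Qed.

Lemma t_chain_eq : partition_chain T = [set tP i | i : 'I_(tsz r).+1].
Proof. by rewrite /partition_chain; apply: eq_imset => i; rewrite t_Pi. Qed.

Lemma t_chain : chain_with_top (partition_chain T).
Proof.
split.
- move=> Q; rewrite t_chain_eq => /imsetP[i _ ->]; exact: t_P_part.
- by rewrite t_chain_eq; apply/imsetP; exists ord_max => //; rewrite /= t_P_top.
- move=> P Q; rewrite t_chain_eq => /imsetP[i _ ->] /imsetP[j _ ->].
  case: (leqP i j) => h; [left|right]; apply: t_P_ref; [done|exact: ltnW].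
Qed.

Lemma t_cover B : (B \in cover (partition_chain T)) = [exists u, B == clus u].
Proof.
rewrite t_chain_eq; apply/bigcupP/existsP.
  by move=> [Q /imsetP[i _ ->] /imsetP[u _ ->]]; exists u.
move=> [u /eqP->].
have H : r u < (tsz r).+1 by rewrite ltnS t_rank_le.
exists (tP (Ordinal H)); first by apply/imsetP; exists (Ordinal H).
apply/imsetP; exists u => //; rewrite inE leqnn /=; apply/forallP => p.
by apply/implyP => a; exact: t_rank_arc a.
Qed.

Lemma t_arc_char u v : arc u v = (clus v \proper clus u) &&
  ~~ [exists B, [&& B \in cover (partition_chain T), clus v \proper B & B \proper clus u]].
Proof.
rewrite t_clus_proper; apply/idP/idP.
  move=> a; have ne : u != v by apply/eqP=> e; have := t_rank_arc a; rewrite e ltnn.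
  rewrite connect1 // ne /=; apply/existsP => -[B /and3P[hB p1 p2]].
  move: hB; rewrite t_cover => /existsP[w /eqP e]; subst B.
  move: p1 p2; rewrite !t_clus_proper => /andP[c1 n1] /andP[c2 n2].
  have [q qv wq] := t_conn_last c1 n1; rewrite (t_upar qv a) in wq.
  by rewrite (t_antisym c2 wq) eqxx in n2.
move=> /andP[/andP[c ne] nb]; have [p pv up] := t_conn_last c ne.
case: (eqVneq p u) => [<-//|ne']; case/negP: nb; apply/existsP; exists (clus p).
rewrite t_cover !t_clus_proper connect1 // up [u == p]eq_sym ne' /=.
apply/andP; split; first by apply/existsP; exists p.
by rewrite andbT; apply/eqP=> e; have := t_rank_arc pv; rewrite e ltnn.
Qed.

Lemma t_phi_char x : [/\ clus (phi x) \in cover (partition_chain T), x \in clus (phi x) &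
  forall B, B \in cover (partition_chain T) -> x \in B -> clus (phi x) \subset B].
Proof.
split.
- by rewrite t_cover; apply/existsP; exists (phi x).
- by rewrite inE connect0.
- move=> B; rewrite t_cover => /existsP[w /eqP->]; rewrite inE => h.
  by rewrite t_clus_sub.
Qed.

Lemma t_below i u : [exists D in tP i, D \proper clus u] = (i < r u).
Proof.
apply/idP/idP.
  move=> /existsP[D /andP[/imsetP[w hw ->] pr]]; move: pr; rewrite t_clus_proper.
  move=> /andP[c ne]; have [p pw up] := t_conn_last c ne.
  move: hw; rewrite inE => /andP[_ /forallP/(_ p)/implyP/(_ pw)] ip.
  have [h1 _] := t_rank_conn up; exact: leq_trans ip h1.
move=> h; have [x hx] := t_has_leaf u.
have [w hw cw] := t_Vi_ex (i:=i) (z:=phi x) ltac:(by rewrite t_phi_rank).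
apply/existsP; exists (clus w); apply/andP; split; first by apply/imsetP; exists w.
move: (hw); rewrite inE => /andP[rw _].
rewrite t_clus_proper; case/orP: (t_cmp hx cw) => c.
  rewrite c /=; apply/eqP=> e; subst w; by move: (leq_trans h rw); rewrite ltnn.
have [h1 _] := t_rank_conn c; by move: (leq_trans h (leq_trans h1 rw)); rewrite ltnn.
Qed.

Lemma t_P_inj i j : i <= tsz r -> j <= tsz r -> tP i = tP j -> i = j.
Proof.
wlog: i j / i < j.
  move=> W hi hj e; case: (ltngtP i j) => [h|h|//]; first exact: W.
  by apply/esym/W.
move=> h _ hj e; have [v hv] := t_rank_ex hj.
by have := t_below i v; rewrite e t_below hv h ltnn.
Qed.

Lemma card_ord_lt n k : k <= n -> #|[pred i : 'I_n | i < k]| = k.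
Proof.
move=> kn; have inj : injective (widen_ord kn) by move=> a b /(congr1 val) /= /val_inj.
rewrite -[RHS]card_ord -(card_imset _ inj).
apply: eq_card => i; rewrite !inE; apply/idP/imsetP.
  by move=> hi; exists (Ordinal hi) => //; apply/val_inj.
by move=> [k' _ ->] /=.
Qed.

Lemma t_rank_char u : r u = #|[set Q in partition_chain T | [exists D in Q, D \proper clus u]]|.
Proof.
have -> : [set Q in partition_chain T | [exists D in Q, D \proper clus u]] =
    [set tP (nat_of_ord i) | i in [pred i : 'I_(tsz r).+1 | i < r u]].
  apply/setP => Q; rewrite inE t_chain_eq; apply/andP/imsetP.
    by move=> [/imsetP[i _ ->] h]; exists i => //; rewrite inE -t_below.
  by move=> [i hi ->]; split; [apply/imsetP; exists i | rewrite t_below].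
rewrite card_in_imset ?card_ord_lt //; first by apply: leq_trans (t_rank_le u) (leqnSn _).
move=> i j _ _ /t_P_inj e; apply/val_inj/e; by rewrite -ltnS.
Qed.

End Tree.

Lemma conn_map (U W : finType) (e : rel U) (e' : rel W) (f : U -> W) :
  (forall u v, e' (f u) (f v) = e u v) -> forall u v, connect e u v -> connect e' (f u) (f v).
Proof.
move=> H u v /connectP[p hp ->]; elim: p u hp => [|y p IH] u /=; first by rewrite connect0.
move=> /andP[a hp]; apply: connect_trans (IH y hp); apply: connect1; by rewrite H.
Qed.

Section Iso.
Variables (X : finType) (T1 T2 : rankedXTree X).

Lemma iso_chain : rt_iso T1 T2 -> partition_chain T1 = partition_chain T2.
Proof.
move=> [f [[g fg gf] Harc Hphi Hr]].
have Harc' : forall a b, rt_arc (g a) (g b) = rt_arc a b.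
  by move=> a b; rewrite -Harc !gf.
have Hconn : forall u v, connect (@rt_arc X T2) (f u) (f v) = connect (@rt_arc X T1) u v.
  move=> u v; apply/idP/idP; last exact: conn_map.
  by move=> /(conn_map Harc'); rewrite !fg.
have Hclus : forall u, clus (f u) = clus u.
  by move=> u; apply/setP=> x; rewrite !inE -Hphi Hconn.
have Hs : tsz (@rt_rank X T1) = tsz (@rt_rank X T2).
  apply/eqP; rewrite eqn_leq; apply/andP; split.
    have [v <-] := t_rank_ex (leqnn (tsz (@rt_rank X T1))); rewrite Hr; exact: t_rank_le.
  have [v <-] := t_rank_ex (leqnn (tsz (@rt_rank X T2))); rewrite -(gf v) -Hr; exact: t_rank_le.
have HV : forall i u, (f u \in Vi (@rt_arc X T2) (@rt_rank X T2) i) = (u \in Vi (@rt_arc X T1) (@rt_rank X T1) i).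
  move=> i u; rewrite !inE -Hr; congr (_ && _); apply/forallP/forallP => H p.
    by rewrite -Harc Hr; apply: H.
  by rewrite -(gf p) Harc -Hr; apply: H.
have HP : forall i, tP T2 i = tP T1 i.
  move=> i; apply/setP=> B; apply/imsetP/imsetP => -[u hu ->].
    by exists (g u); [rewrite -HV gf | rewrite -Hclus gf].
  by exists (f u); [rewrite HV | rewrite Hclus].
rewrite !t_chain_eq; apply/setP=> Q; apply/imsetP/imsetP => -[i _ ->].
  have hi : (i < (tsz (@rt_rank X T2)).+1)%N by rewrite -Hs.
  by exists (Ordinal hi) => //=; rewrite HP.
have hi : (i < (tsz (@rt_rank X T1)).+1)%N by rewrite Hs.
by exists (Ordinal hi) => //=; rewrite HP.
Qed.

Lemma chain_iso : partition_chain T1 = partition_chain T2 -> rt_iso T1 T2.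
Proof.
move=> E.
have ex12 : forall u : rt_V T1, exists w : rt_V T2, clus w = clus u.
  move=> u; have : clus u \in cover (partition_chain T2).
    by rewrite -E t_cover; apply/existsP; exists u.
  by rewrite t_cover => /existsP[w /eqP e]; exists w.
have ex21 : forall u : rt_V T2, exists w : rt_V T1, clus w = clus u.
  move=> u; have : clus u \in cover (partition_chain T1).
    by rewrite E t_cover; apply/existsP; exists u.
  by rewrite t_cover => /existsP[w /eqP e]; exists w.
pose f (u : rt_V T1) := odflt (rt_root T2) [pick w : rt_V T2 | clus w == clus u].
pose g (u : rt_V T2) := odflt (rt_root T1) [pick w : rt_V T1 | clus w == clus u].
have Hf : forall u, clus (f u) = clus u.
  move=> u; rewrite /f; case: pickP => [w /eqP //|none].
  by have [w hw] := ex12 u; have := none w; rewrite hw eqxx.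
have Hg : forall u, clus (g u) = clus u.
  move=> u; rewrite /g; case: pickP => [w /eqP //|none].
  by have [w hw] := ex21 u; have := none w; rewrite hw eqxx.
exists f; split.
- exists g => u; apply: t_clus_inj; by rewrite ?Hf ?Hg.
- by move=> u v; rewrite t_arc_char t_arc_char !Hf E.
- move=> x; apply: t_clus_inj; rewrite Hf.
  have [a1 b1 c1] := t_phi_char T1 x; have [a2 b2 c2] := t_phi_char T2 x.
  apply/eqP; rewrite eqEsubset; apply/andP; split.
    by apply: c1 => //; rewrite E.
  by apply: c2 => //; rewrite -E.
- by move=> v; rewrite t_rank_char (t_rank_char (f v)) Hf E.
Qed.

End Iso.

Section Parts.
Variable X : finType.

Lemma pb_eq (Q : {set {set X}}) E D x : trivIset Q -> E \in Q -> D \in Q ->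
  x \in E -> x \in D -> E = D.
Proof. by move=> tQ hE hD xE xD; rewrite -(def_pblock tQ hE xE) (def_pblock tQ hD xD). Qed.

Lemma partP (P : {set {set X}}) : partition P [set: X] ->
  [/\ cover P = [set: X], trivIset P & set0 \notin P].
Proof. by move=> /and3P[/eqP a b c]. Qed.

Lemma part_blk (P : {set {set X}}) x : partition P [set: X] ->
  pblock P x \in P /\ x \in pblock P x.
Proof.
move=> /partP[c _ _]; have hx : x \in cover P by rewrite c inE.
by rewrite pblock_mem // mem_pblock.
Qed.

Lemma part_n0 (P : {set {set X}}) B : partition P [set: X] -> B \in P -> exists x, x \in B.
Proof.
move=> /partP[_ _ n0] hB; have : B != set0 by apply/eqP=> e; rewrite -e hB in n0.
by case/set0Pn=> x hx; exists x.
Qed.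

Lemma part_sub (P Q : {set {set X}}) : partition P [set: X] -> partition Q [set: X] ->
  P \subset Q -> P = Q.
Proof.
move=> pP pQ sPQ; apply/eqP; rewrite eqEsubset sPQ /=; apply/subsetP=> B hB.
have [x hx] := part_n0 pQ hB; have [b1 b2] := part_blk x pP.
have [_ tQ _] := partP pQ.
by rewrite (pb_eq tQ hB (subsetP sPQ _ b1) hx b2).
Qed.

End Parts.

Section NoRet.
Variables (V : finType) (arc : rel V).
Hypothesis Hac : acyclic arc.
Hypothesis Hin : forall v, indeg arc v <= 1.

Lemma nr_upar p q v : arc p v -> arc q v -> p = q.
Proof.
move=> hp hq; have /card_le1_eqP H := Hin v.
by have := H p q; rewrite !inE => /(_ hp hq).
Qed.

Lemma nr_path_eq s p1 p2 : path arc s p1 -> path arc s p2 -> last s p1 = last s p2 -> p1 = p2.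
Proof.
elim/last_ind: p1 p2 => [|p1 a IH] p2; case/lastP: p2 => [|p2 b] //=.
- by move=> _ hp e; have := Hac hp (esym e); case: p2 {hp e}.
- by move=> hp _ e; have := Hac hp e; case: p1 {IH hp e}.
rewrite !rcons_path !last_rcons => /andP[h1 a1] /andP[h2 b2] e; subst b.
by rewrite (IH p2 h1 h2 (nr_upar a1 b2)).
Qed.

Lemma nr_no_cycle q1 q2 : ~ reticulation_cycle arc q1 q2.
Proof.
move=> [d1 d2 ne [s [t [hs1 hs2 ht1 ht2 _]]]]; apply: ne.
case: q1 d1 hs1 ht1 => [|a1 p1] //= d1 h1 e1; case: q2 d2 hs2 ht2 => [|a2 p2] //= d2 h2 e2.
subst a1 a2; by rewrite (nr_path_eq d1 d2 _) // e1 e2.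
Qed.

Lemma nr_nsa : no_shared_arc arc.
Proof. by move=> q1 q2 q1' q2' c; case: (nr_no_cycle c). Qed.

End NoRet.

Lemma tsz_of (V : finType) (r : V -> nat) n :
  (forall k, (k \in [seq r v | v <- enum V]) = (k < n.+1)) -> tsz r = n.
Proof.
move=> H; rewrite /Defs.tsize.
have : perm_eq (undup [seq r v | v <- enum V]) (iota 0 n.+1).
  apply: uniq_perm; [exact: undup_uniq | exact: iota_uniq | ].
  by move=> k; rewrite mem_undup H mem_iota.
by move/perm_size; rewrite size_iota => ->.
Qed.

Section Canon.
Variables (X : finType) (C : {set {set {set X}}}).
Hypothesis HC : chain_with_top C.

Lemma cP (P : {set {set X}}) : P \in C -> partition P [set: X].
Proof. by have [H _ _] := HC; apply: H. Qed.

Lemma ref_sub (P Q : {set {set X}}) (B E : {set X}) x : P \in C -> Q \in C -> refines P Q -> B \in P -> E \in Q ->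
  x \in B -> x \in E -> B \subset E.
Proof.
move=> hP hQ R hB hE xB xE; have [E' hE' s] := R B hB.
have [_ tQ _] := partP (cP hQ).
by rewrite (pb_eq tQ hE hE' xE (subsetP s x xB)).
Qed.

Lemma ref_trans (P Q R : {set {set X}}) : refines P Q -> refines Q R -> refines P R.
Proof.
move=> a b B hB; have [E hE s] := a B hB; have [F hF s'] := b E hE.
by exists F => //; apply: subset_trans s s'.
Qed.

Definition clt (P Q : {set {set X}}) := [exists D in P, exists B in Q, D \proper B].

Lemma lt_nref (P Q : {set {set X}}) : P \in C -> Q \in C -> clt P Q -> ~ refines Q P.
Proof.
move=> hP hQ /existsP[D /andP[hD /existsP[B /andP[hB pr]]]] R.
have [E hE s] := R B hB; have [x hx] := part_n0 (cP hP) hD.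
have sDE : D \subset E by apply: subset_trans (proper_sub pr) s.
have [_ tP _] := partP (cP hP).
rewrite -(pb_eq tP hD hE hx (subsetP sDE x hx)) in s.
by move: pr; rewrite properE s andbF.
Qed.

Lemma lt_ref (P Q : {set {set X}}) : P \in C -> Q \in C -> clt P Q -> refines P Q.
Proof.
move=> hP hQ h; have [_ _ H] := HC; case: (H P Q hP hQ) => // R.
by case: (lt_nref hP hQ h R).
Qed.

Lemma lt_irr (P : {set {set X}}) : P \in C -> ~~ clt P P.
Proof. by move=> hP; apply/negP=> h; apply: (lt_nref hP hP h) => B hB; exists B. Qed.

Lemma ref_lt (P Q : {set {set X}}) : P \in C -> Q \in C -> refines P Q -> P != Q -> clt P Q.
Proof.
move=> hP hQ R ne; case: (boolP (Q \subset P)) => [s|].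
  by rewrite (part_sub (cP hQ) (cP hP) s) eqxx in ne.
case/subsetPn => B hB nB; have [x hx] := part_n0 (cP hQ) hB.
have [b1 b2] := part_blk x (cP hP).
apply/existsP; exists (pblock P x); rewrite b1 /=; apply/existsP; exists B; rewrite hB /=.
rewrite properEneq (ref_sub hP hQ R b1 hB b2 hx) andbT.
by apply/eqP=> e; rewrite -e b1 in nB.
Qed.

Lemma lt_total (P Q : {set {set X}}) : P \in C -> Q \in C -> P != Q -> clt P Q || clt Q P.
Proof.
move=> hP hQ ne; have [_ _ H] := HC; case: (H P Q hP hQ) => R.
  by rewrite ref_lt.
by rewrite orbC ref_lt // eq_sym.
Qed.

Lemma lt_trans (P Q R : {set {set X}}) : P \in C -> Q \in C -> R \in C -> clt P Q -> clt Q R -> clt P R.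
Proof.
move=> hP hQ hR a b; apply: ref_lt => //.
  exact: ref_trans (lt_ref hP hQ a) (lt_ref hQ hR b).
apply/eqP=> e; subst R; exact: lt_nref hP hQ a (lt_ref hQ hP b).
Qed.

Definition hh (Q : {set {set X}}) := #|[set P in C | clt P Q]|.

Lemma h_lt (Q Q' : {set {set X}}) : Q \in C -> Q' \in C -> clt Q Q' -> hh Q < hh Q'.
Proof.
move=> hQ hQ' l; apply: proper_card; apply/properP; split.
  apply/subsetP=> P; rewrite !inE => /andP[hP a]; rewrite hP /=.
  exact: lt_trans hP hQ hQ' a l.
by exists Q; rewrite !inE hQ ?l // (negbTE (lt_irr hQ)).
Qed.

Lemma h_bound (Q : {set {set X}}) : Q \in C -> hh Q < #|C|.
Proof.
move=> hQ; rewrite (cardsD1 Q C) hQ add1n ltnS; apply: subset_leq_card.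
apply/subsetP=> P; rewrite !inE => /andP[hP a]; rewrite hP andbT.
by apply/eqP=> e; subst P; rewrite (negbTE (lt_irr hQ)) in a.
Qed.

Lemma h_inj : {in C &, injective hh}.
Proof.
move=> Q Q' hQ hQ' e; apply/eqP; apply/negP=> /negP ne.
case/orP: (lt_total hQ hQ' ne) => l.
  by have := h_lt hQ hQ' l; rewrite e ltnn.
by have := h_lt hQ' hQ l; rewrite e ltnn.
Qed.

Lemma h_onto k : k < #|C| -> exists2 Q, Q \in C & hh Q = k.
Proof.
move=> hk; set s1 := [seq hh Q | Q <- enum C].
have u1 : uniq s1.
  rewrite map_inj_in_uniq ?enum_uniq // => a b; rewrite !mem_enum; exact: h_inj.
have sub : {subset s1 <= iota 0 #|C|}.
  by move=> n /mapP[Q hQ ->]; rewrite mem_iota add0n h_bound // -mem_enum.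
have [_ E] := uniq_min_size u1 sub ltac:(by rewrite size_iota size_map -cardE).
have : k \in s1 by rewrite E mem_iota.
by move=> /mapP[Q hQ ->]; exists Q; rewrite // -mem_enum.
Qed.

Lemma top_C : [set [set: X]] \in C.
Proof. by have [_ H _] := HC. Qed.

Definition cK := cover C.

Lemma top_K : [set: X] \in cK.
Proof. by apply/bigcupP; exists [set [set: X]]; rewrite ?top_C ?set11. Qed.

Lemma K_n0 B : B \in cK -> exists x, x \in B.
Proof. by move=> /bigcupP[P hP hB]; exact: part_n0 (cP hP) hB. Qed.

Lemma K_lam B D x : B \in cK -> D \in cK -> x \in B -> x \in D ->
  (B \subset D) || (D \subset B).
Proof.
move=> /bigcupP[P hP hB] /bigcupP[Q hQ hD] xB xD; have [_ _ H] := HC.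
case: (H P Q hP hQ) => R.
  by rewrite (ref_sub hP hQ R hB hD xB xD).
by rewrite (ref_sub hQ hP R hD hB xD xB) orbT.
Qed.

Local Notation cV := {B : {set X} | B \in cK}.
Definition cVf : finType := {B : {set X} | B \in cK}.

Definition carc : rel cV := fun a b =>
  (val b \proper val a) && ~~ [exists c : cV, (val b \proper val c) && (val c \proper val a)].

Definition croot : cV := exist (fun B => B \in cK) [set: X] top_K.

Definition cphi (x : X) : cV := [arg min_(B < croot | x \in val B) #|val B|].

Definition crank (B : cV) : nat := #|[set P in C | [exists D in P, D \proper val B]]|.

Lemma c_phi_in x : x \in val (cphi x).
Proof. by rewrite /cphi; case: arg_minnP => //; rewrite inE. Qed.

Lemma c_phi_min x (B : cV) : x \in val B -> val (cphi x) \subset val B.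
Proof.
move=> hB; rewrite /cphi; case: arg_minnP => [|m hm mm]; first by rewrite inE.
have := mm B hB => le; case/orP: (K_lam (valP m) (valP B) hm hB) => // s.
suff -> : val B = val m by [].
by apply/eqP; rewrite eqEcard s le.
Qed.

Lemma c_arc_proper a b : carc a b -> val b \proper val a.
Proof. by case/andP. Qed.

Lemma c_desc (a D : cV) : val D \proper val a -> exists2 c, carc a c & val D \subset val c.
Proof.
move=> pr.
have P0 : (val D \subset val D) && (val D \proper val a) by rewrite subxx pr.
case: (@arg_maxnP _ D (fun c : cV => (val D \subset val c) && (val c \proper val a)) (fun c : cV => #|val c|) P0) => c /andP[s pc] mx.
exists c => //; rewrite /carc pc /=; apply/existsP => -[e /andP[p1 p2]].
have := mx e; rewrite (subset_trans s (proper_sub p1)) p2 => /(_ isT) h.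
by have := leq_ltn_trans (h : #|val e| <= #|val c|) (proper_card p1); rewrite ltnn.
Qed.

Lemma c_conn_sub (a b : cV) : val b \subset val a -> connect carc a b.
Proof.
have H : forall n (a : cV), #|val a| <= n -> val b \subset val a -> connect carc a b.
  elim=> [|n IH] a0 ha s; (case: (eqVneq (val b) (val a0)) => [e|ne];
    [by rewrite (val_inj e) connect0|]);
  have [c ac sc] := c_desc (a:=a0) (D:=b) ltac:(by rewrite properEneq ne s);
  have lt := proper_card (c_arc_proper ac).
    by move: (leq_trans lt ha).
  by apply: connect_trans (connect1 ac) (IH c _ sc); rewrite -ltnS (leq_trans lt ha).
exact: H (leqnn _).
Qed.

Lemma c_conn_imp a b : connect carc a b -> val b \subset val a.
Proof.
move=> /connectP[p hp ->]; elim: p a hp => [|y p IH] a /=; first by rewrite subxx.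
move=> /andP[ay hp]; apply: subset_trans (IH _ hp) (proper_sub (c_arc_proper ay)).
Qed.

Lemma c_indeg v : indeg carc v <= 1.
Proof.
apply/card_le1_eqP => p q; rewrite !inE => hp hq.
have pp := c_arc_proper hp; have qq := c_arc_proper hq.
have [x hx] := K_n0 (valP v).
have xp := subsetP (proper_sub pp) x hx; have xq := subsetP (proper_sub qq) x hx.
case: (eqVneq (val p) (val q)) => [e|ne]; first by apply/esym/val_inj.
exfalso; case/orP: (K_lam (valP p) (valP q) xp xq) => s.
  case/andP: hq => _ /existsP; apply; exists p; by rewrite pp properEneq ne s.
case/andP: hp => _ /existsP; apply; exists q; by rewrite qq properEneq eq_sym ne s.
Qed.

Lemma c_acyclic : acyclic carc.
Proof.
move=> v [|y p] //= /andP[vy hp] e.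
have c : connect carc y (last y p) by apply/connectP; exists p.
rewrite e in c; have s := c_conn_imp c; have := c_arc_proper vy.
by rewrite properE s andbF.
Qed.

Lemma c_root_indeg : indeg carc croot = 0.
Proof.
apply/eqP; rewrite cards_eq0; apply/eqP/setP=> p; rewrite !inE.
apply/negbTE/negP => /c_arc_proper; rewrite properE subsetT /=; by case/andP.
Qed.

Lemma c_reach v : connect carc croot v.
Proof. by apply: c_conn_sub; rewrite subsetT. Qed.

Lemma c_tree : rooted_X_tree carc croot cphi.
Proof.
have Hin := c_indeg.
split; last by move=> v; rewrite /reticulation -ltnNge ltnS Hin.
split.
- by split; [exact: c_acyclic | exact: c_root_indeg | exact: c_reach].
- by move=> v; apply: leq_trans (Hin v) _.
- exact: nr_nsa c_acyclic Hin.
move=> v /orP[lf|/andP[_ o1]].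
  have [x hx] := K_n0 (valP v); exists x.
  have s := c_phi_min hx; case: (eqVneq (val (cphi x)) (val v)) => [e|ne]; first exact: val_inj.
  have [c vc _] := c_desc (a:=v) (D:=cphi x) ltac:(by rewrite properEneq ne s).
  move: lf; rewrite /leafv /outdeg cards_eq0 => /eqP E.
  by have := in_set0 c; rewrite -E inE vc.
move: o1; rewrite /outdeg => /cards1P[c E].
have vc : carc v c by have := set11 c; rewrite -E inE.
have [_ [x hxv hxc]] := properP (c_arc_proper vc).
exists x; have s := c_phi_min hxv.
case: (eqVneq (val (cphi x)) (val v)) => [e|ne]; first exact: val_inj.
have [c' vc' s'] := c_desc (a:=v) (D:=cphi x) ltac:(by rewrite properEneq ne s).
have : c' \in [set c] by rewrite -E inE.
rewrite inE => /eqP ec; subst c'.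
by rewrite (subsetP s' x (c_phi_in x)) in hxc.
Qed.

Lemma c_phi_rank x : crank (cphi x) = 0.
Proof.
apply/eqP; rewrite cards_eq0; apply/eqP/setP => P; rewrite !inE.
apply/negbTE/negP => /andP[hP /existsP[D /andP[hD pr]]].
have [b1 b2] := part_blk x (cP hP).
have hK : pblock P x \in cK by apply/bigcupP; exists P.
have s : val (cphi x) \subset pblock P x := c_phi_min (B := exist (fun B => B \in cK) _ hK) b2.
have [y hy] := part_n0 (cP hP) hD.
have [_ tP _] := partP (cP hP).
have hy2 : y \in pblock P x by apply: (subsetP s); apply: (subsetP (proper_sub pr)).
rewrite -(pb_eq tP hD b1 hy hy2) /= in s.
by move: pr; rewrite properE s andbF.
Qed.

Lemma c_rank_arc u v : carc u v -> crank v < crank u.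
Proof.
move=> a; have pr := c_arc_proper a; apply: proper_card; apply/properP; split.
  apply/subsetP=> P; rewrite !inE => /andP[hP /existsP[D /andP[hD p]]].
  by rewrite hP; apply/existsP; exists D; rewrite hD (proper_trans p pr).
have /bigcupP[P hP hv] := valP v.
exists P; first by rewrite inE hP; apply/existsP; exists (val v); rewrite hv.
rewrite inE hP /=; apply/negP => /existsP[D /andP[hD p]].
have [y hy] := part_n0 (cP hP) hD; have [_ tP _] := partP (cP hP).
have e := pb_eq tP hD hv hy (subsetP (proper_sub p) y hy).
by rewrite e in p; move: p; rewrite properE subxx.
Qed.

Lemma c_rank_bound B : crank B < #|C|.
Proof.
rewrite (cardsD1 [set [set: X]] C) top_C add1n ltnS; apply: subset_leq_card.
apply/subsetP=> P; rewrite !inE => /andP[hP /existsP[D /andP[hD p]]]; rewrite hP andbT.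
apply/eqP=> e; subst P; move: hD; rewrite inE => /eqP e; subst D.
by move: p; rewrite properE subsetT andbF.
Qed.

Lemma fresh (hX : 0 < #|X|) Q : Q \in C -> exists2 B, B \in Q & forall P, P \in C -> clt P Q -> B \notin P.
Proof.
move=> hQ; case: (boolP [exists P in C, clt P Q]) => [/existsP[P0 /andP[h0 l0]]|none].
  have P0' : (P0 \in C) && clt P0 Q by rewrite h0 l0.
  case: (@arg_maxnP _ P0 (fun P => (P \in C) && clt P Q) hh P0') => Qm /andP[hm lm] mx.
  have nsub : ~~ (Q \subset Qm).
    apply/negP=> s; have := part_sub (cP hQ) (cP hm) s => e; subst Qm.
    by rewrite (negbTE (lt_irr hQ)) in lm.
  case/subsetPn: nsub => B hB nB; exists B => // P hP l; apply/negP=> hBP.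
  case: (eqVneq P Qm) => [e|ne]; first by subst P; rewrite hBP in nB.
  case/orP: (lt_total hP hm ne) => l2.
    have [E hE s] := lt_ref hP hm l2 hBP.
    have [x hx] := part_n0 (cP hQ) hB.
    have s2 := ref_sub hm hQ (lt_ref hm hQ lm) hE hB (subsetP s x hx) hx.
    have e : E = B by apply/eqP; rewrite eqEsubset s s2.
    by subst E; rewrite hE in nB.
  have := mx P; rewrite hP l => /(_ isT) h.
  by have := leq_ltn_trans (h : hh P <= hh Qm) (h_lt hm hP l2); rewrite ltnn.
case/card_gt0P: hX => x _; have [b1 _] := part_blk x (cP hQ).
exists (pblock Q x) => // P hP l; case/negP: none; apply/existsP; exists P; by rewrite hP.
Qed.

Lemma c_rank_fresh Q B (hBK : B \in cK) : Q \in C -> B \in Q ->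
  (forall P, P \in C -> clt P Q -> B \notin P) ->
  crank (exist (fun B => B \in cK) B hBK) = hh Q.
Proof.
move=> hQ hB fr; rewrite /crank /hh; apply: eq_card => P; rewrite !inE /=.
case hP: (P \in C) => //=; apply/idP/idP.
  move=> /existsP[D /andP[hD p]]; apply/existsP; exists D; rewrite hD /=.
  by apply/existsP; exists B; rewrite hB.
move=> l; have [x hx] := part_n0 (cP hQ) hB; have [b1 b2] := part_blk x (cP hP).
apply/existsP; exists (pblock P x); rewrite b1 /= properEneq.
rewrite (ref_sub hP hQ (lt_ref hP hQ l) b1 hB b2 hx) andbT.
by apply/eqP=> e; have := fr P hP l; rewrite -e b1.
Qed.

Lemma c_rank_onto (hX : 0 < #|X|) k : k < #|C| -> exists B, crank B = k.
Proof.
move=> hk; have [Q hQ <-] := h_onto hk; have [B hB fr] := fresh hX hQ.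
have hBK : B \in cK by apply/bigcupP; exists Q.
by exists (exist _ B hBK); apply: c_rank_fresh.
Qed.

Lemma c_C0 : 0 < #|C|.
Proof. by apply/card_gt0P; exists [set [set: X]]; exact: top_C. Qed.

Lemma c_map (hX : 0 < #|X|) k : (k \in [seq crank v | v <- enum cVf]) = (k < #|C|).
Proof.
apply/mapP/idP => [[v _ ->]|hk]; first exact: c_rank_bound.
by have [B hB] := c_rank_onto hX hk; exists B; rewrite ?mem_enum.
Qed.

Lemma c_tsz (hX : 0 < #|X|) : tsz crank = #|C|.-1.
Proof. by apply: tsz_of => k; rewrite c_map // prednK // c_C0. Qed.

Lemma c_ranking (hX : 0 < #|X|) : ranking carc cphi crank.
Proof.
split.
  split; [exact: c_phi_rank | by move=> u v a _; exact: c_rank_arc | ].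
  by move=> u v _; rewrite /reticulation leqNgt ltnS c_indeg.
by move=> k; rewrite c_map // c_tsz // -[in LHS](prednK c_C0) ltnS.
Qed.

Definition canon (hX : 0 < #|X|) : rankedXTree X :=
  @RankedXTree X cVf carc croot cphi crank c_tree (c_ranking hX).

End Canon.

Section Final.
Variables (X : finType) (C : {set {set {set X}}}).
Hypothesis HC : chain_with_top C.
Variable hX : 0 < #|X|.
Local Notation T := (canon HC hX).

Lemma d_clus (u : cVf C) : clus (T:=T) u = val u.
Proof.
apply/setP => x; rewrite inE /=; apply/idP/idP => [/c_conn_imp s|hx].
  exact: (subsetP s x (c_phi_in HC x)).
exact: (c_conn_sub (c_phi_min HC hx)).
Qed.

Lemma d_tP Q : Q \in C -> tP T (hh C Q) = Q.
Proof.
move=> hQ; apply/esym; apply: part_sub; [by have := cP HC hQ | by have := t_P_part T (hh C Q) | ].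
apply/subsetP => B hB.
have hBK : B \in cK C by apply/bigcupP; exists Q.
pose b : cVf C := exist _ B hBK.
apply/imsetP; exists b; last by rewrite d_clus.
rewrite inE; apply/andP; split.
  rewrite /= /crank /hh; apply: subset_leq_card; apply/subsetP => P; rewrite !inE.
  case/andP=> hP /existsP[D /andP[hD p]]; rewrite hP /=.
  by apply/existsP; exists D; rewrite hD /=; apply/existsP; exists B; rewrite hB.
apply/forallP=> p; apply/implyP => a; rewrite /= /crank /hh.
have pr := c_arc_proper a.
apply: proper_card; apply/properP; split.
  apply/subsetP=> P; rewrite !inE => /andP[hP l]; rewrite hP /=.
  have [x hx] := part_n0 (cP HC hQ) hB; have [b1 b2] := part_blk x (cP HC hP).
  apply/existsP; exists (pblock P x); rewrite b1 /=.
  apply: sub_proper_trans pr; by have := ref_sub HC hP hQ (lt_ref HC hP hQ l) b1 hB b2 hx.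
exists Q; first by rewrite inE hQ; apply/existsP; exists B; rewrite hB pr.
by rewrite inE hQ (negbTE (lt_irr HC hQ)).
Qed.

Lemma d_chain : partition_chain T = C.
Proof.
rewrite t_chain_eq; have E : tsz (@rt_rank X T) = #|C|.-1 := c_tsz HC hX.
apply/setP => Q; apply/imsetP/idP.
  move=> [i _ ->]; have hi : i < #|C| by rewrite -(prednK (c_C0 HC)) -E.
  by have [Q' hQ' <-] := h_onto HC hi; rewrite d_tP.
move=> hQ; have hi : hh C Q < (tsz (@rt_rank X T)).+1.
  by rewrite E prednK ?(c_C0 HC) // h_bound.
by exists (Ordinal hi); rewrite //= d_tP.
Qed.

End Final.

Theorem mainTheorem3 (X : finType) (hX : 0 < #|X|) :
  [/\ (* well defined on isomorphism classes *)
      forall T1 T2 : rankedXTree X, rt_iso T1 T2 -> partition_chain T1 = partition_chain T2,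
      (* lands in chains of partitions containing {X} *)
      forall T : rankedXTree X, chain_with_top (partition_chain T),
      (* injective on isomorphism classes *)
      forall T1 T2 : rankedXTree X, partition_chain T1 = partition_chain T2 -> rt_iso T1 T2 &
      (* surjective *)
      forall C : {set {set {set X}}}, chain_with_top C ->
        exists T : rankedXTree X, partition_chain T = C].
Proof.
split.
- exact: iso_chain.
- exact: t_chain.
- exact: chain_iso.
- by move=> C HC; exists (canon HC hX); exact: d_chain.
Qed.
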